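(* Let $\rho_1,\dots,\rho_N$ be pairwise orthogonal density operators on $\mathbb C^2\otimes\mathbb C^n$, shared by Alice (holding the qubit $\mathbb C^2$) and Bob (holding $\mathbb C^n$). Consider LOCC protocols in which Alice goes first. Then there is such a protocol that perfectly discriminates $\rho_1,\dots,\rho_N$ if and only if there exists an orthonormal basis $\{|0\rangle,|1\rangle\}$ of Alice's space $\mathbb C^2$ such that for every $k$ and every $|\psi_k\rangle\in\mathrm{Supp}(\rho_k)$, writing $$|\psi_k\rangle=|0\rangle_A|\psi_0^{(k)}\rangle_B+|1\rangle_A|\psi_1^{(k)}\rangle_B,$$ one has $\langle\psi_0^{(k)}|\psi_0^{(l)}\rangle=\langle\psi_1^{(k)}|\psi_1^{(l)}\rangle=0$ for all $k\neq l$ and all choices $|\psi_k\rangle\in\mathrm{Supp}(\rho_k)$, $|\psi_l\rangle\in\mathrm{Supp}(\rho_l)$.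
   Context: $\mathrm{Supp}(\rho)$ is the span of the eigenvectors of $\rho$ with positive eigenvalues. Density operators are orthogonal if $\mathrm{tr}(\rho_k\rho_l)=0$. A set of states is perfectly discriminated by an LOCC protocol (finitely many rounds, in each of which one party performs a local measurement and broadcasts the outcome) if, whichever state of the set is given, the protocol outputs its correct index with probability 1. A measurement operator $M$ is trivial if $M^\dagger M$ is proportional to the identity; a measurement is non-trivial if at least one of its operators is not trivial. ''Alice goes first'' means Alice is the party performing the first non-trivial measurement of the protocol. *)

(* Defs.v *)
From HB Require Import structures.
From mathcomp Require Import all_boot all_order all_algebra.
Set Implicit Arguments. Unset Strict Implicit. Unset Printing Implicit Defensive.
Import Order.TTheory GRing.Theory Num.Theory.
Local Open Scope ring_scope.

Section QI.
Variable C : numClosedFieldType.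

Definition dag m n (A : 'M[C]_(m, n)) : 'M[C]_(n, m) := (map_mx Num.conj A)^T.

Definition idx_pair m n (k : 'I_(m * n)) : 'I_m * 'I_n :=
  enum_val (cast_ord (esym (mxvec_cast m n)) k).

Definition kron m1 n1 m2 n2 (A : 'M[C]_(m1, n1)) (B : 'M[C]_(m2, n2))
  : 'M[C]_(m1 * m2, n1 * n2) :=
  \matrix_(i, j) (A (idx_pair i).1 (idx_pair j).1 * B (idx_pair i).2 (idx_pair j).2).

Definition psd d (A : 'M[C]_d) : Prop :=
  dag A = A /\ forall v : 'cV[C]_d, 0 <= (dag v *m A *m v) 0 0.

Definition density d (rho : 'M[C]_d) : Prop := psd rho /\ \tr rho = 1.

Definition in_supp d (rho : 'M[C]_d) (psi : 'cV[C]_d) : Prop :=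
  exists (m : nat) (vs : 'I_m -> 'cV[C]_d) (cs : 'I_m -> C),
    (forall i, exists lam : C, 0 < lam /\ rho *m vs i = lam *: vs i) /\
    psi = \sum_(i < m) cs i *: vs i.

Definition trivial_op d (M : 'M[C]_d) : Prop := exists c : C, dag M *m M = c%:M.

(* finite-round LOCC protocols on C^2 (Alice) (x) C^n (Bob), outputting an
   index in 'I_N.  Each node is a local measurement (one operator per
   outcome) whose outcome is broadcast; the continuation depends on it. *)
Inductive protocol (n N : nat) : Type :=
| Output : 'I_N -> protocol n N
| MeasA : forall m : nat, ('I_m -> 'M[C]_2) -> ('I_m -> protocol n N) -> protocol n N
| MeasB : forall m : nat, ('I_m -> 'M[C]_n) -> ('I_m -> protocol n N) -> protocol n N.

Fixpoint valid n N (P : protocol n N) : Prop :=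
  match P with
  | Output _ => True
  | MeasA m K next => \sum_(i < m) dag (K i) *m K i = 1%:M /\ forall i, valid (next i)
  | MeasB m K next => \sum_(i < m) dag (K i) *m K i = 1%:M /\ forall i, valid (next i)
  end.

Definition nontrivial_meas d m (K : 'I_m -> 'M[C]_d) : Prop :=
  exists i, ~ trivial_op (K i).

(* Alice performs the first non-trivial measurement of the protocol
   (on every branch); a protocol with no non-trivial measurement at all
   is accepted as well. *)
Fixpoint alice_first n N (P : protocol n N) : Prop :=
  match P with
  | Output _ => True
  | MeasA m K next => nontrivial_meas K \/ forall i, alice_first (next i)
  | MeasB m K next => ~ nontrivial_meas K /\ forall i, alice_first (next i)
  end.

(* Running P on the (unnormalised) state rho, every leaf reached with
   nonzero probability (= trace of the unnormalised post-measurement state)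
   outputs k. *)
Fixpoint outputs_correctly n N (P : protocol n N) (rho : 'M[C]_(2 * n)) (k : 'I_N)
  : Prop :=
  match P with
  | Output j => \tr rho = 0 \/ j = k
  | MeasA m K next => forall i,
      outputs_correctly (next i)
        (kron (K i) (1%:M : 'M[C]_n) *m rho *m dag (kron (K i) (1%:M : 'M[C]_n))) k
  | MeasB m K next => forall i,
      outputs_correctly (next i)
        (kron (1%:M : 'M[C]_2) (K i) *m rho *m dag (kron (1%:M : 'M[C]_2) (K i))) k
  end.

Definition perfectly_discriminates n N (P : protocol n N)
  (rho : 'I_N -> 'M[C]_(2 * n)) : Prop :=
  valid P /\ forall k, outputs_correctly P (rho k) k.

End QI.

(* Main.v *)
Require Import Defs.
From HB Require Import structures.
From Stdlib Require Import Classical.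
From mathcomp Require Import all_boot all_order all_algebra.
Set Implicit Arguments. Unset Strict Implicit. Unset Printing Implicit Defensive.
Import Order.TTheory GRing.Theory Num.Theory.
Local Open Scope ring_scope.


Section Aux.
Variable C : numClosedFieldType.

Lemma dagE m n (A : 'M[C]_(m, n)) i j : dag A i j = (A j i)^*.
Proof. by rewrite /Defs.dag !mxE. Qed.

Lemma dagK m n (A : 'M[C]_(m, n)) : dag (dag A) = A.
Proof. by apply/matrixP=> i j; rewrite !dagE conjCK. Qed.

Lemma dag_mul m n p (A : 'M[C]_(m, n)) (B : 'M[C]_(n, p)) :
  dag (A *m B) = dag B *m dag A.
Proof.
apply/matrixP=> i j; rewrite dagE !mxE rmorph_sum; apply: eq_bigr => k _. idtac.
by rewrite !dagE rmorphM mulrC.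
Qed.

Lemma dagD m n (A B : 'M[C]_(m, n)) : dag (A + B) = dag A + dag B.
Proof. by apply/matrixP=> i j; rewrite !(dagE, mxE) rmorphD. Qed.

Lemma dagN m n (A : 'M[C]_(m, n)) : dag (- A) = - dag A.
Proof. by apply/matrixP=> i j; rewrite !(dagE, mxE) rmorphN. Qed.

Lemma dagB m n (A B : 'M[C]_(m, n)) : dag (A - B) = dag A - dag B.
Proof. by rewrite dagD dagN. Qed.

Lemma dagZ m n a (A : 'M[C]_(m, n)) : dag (a *: A) = a^* *: dag A.
Proof. by apply/matrixP=> i j; rewrite !(dagE, mxE) rmorphM. Qed.

Lemma dag0 m n : dag (0 : 'M[C]_(m, n)) = 0.
Proof. by apply/matrixP=> i j; rewrite !(dagE, mxE) rmorph0. Qed.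

Lemma dag_sum m n I (r : seq I) (P : pred I) (F : I -> 'M[C]_(m, n)) :
  dag (\sum_(i <- r | P i) F i) = \sum_(i <- r | P i) dag (F i).
Proof.
apply/matrixP=> i j; rewrite dagE !summxE rmorph_sum; apply: eq_bigr => k _.
by rewrite dagE.
Qed.

Lemma dag_scalar n a : dag (a%:M : 'M[C]_n) = a^*%:M.
Proof.
apply/matrixP=> i j; rewrite dagE !mxE (eq_sym j i).
by case: (i == j); rewrite ?mulr1n ?mulr0n ?rmorph0.
Qed.

Lemma dag1 n : dag (1%:M : 'M[C]_n) = 1%:M.
Proof. by rewrite dag_scalar rmorph1. Qed.

Lemma dag_diag n (d : 'rV[C]_n) : dag (diag_mx d) = diag_mx (map_mx Num.conj d).
Proof.
apply/matrixP=> i j; rewrite dagE !mxE (eq_sym j i).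
by case: eqP => [->|]; rewrite ?mulr1n ?mulr0n ?rmorph0.
Qed.

Lemma idx_pairK m n (i : 'I_m) (j : 'I_n) : idx_pair (mxvec_index i j) = (i, j).
Proof. by rewrite /idx_pair /mxvec_index cast_ordK enum_rankK. Qed.

Lemma sum_idx (R : nmodType) m n (F : 'I_(m * n) -> R) :
  \sum_k F k = \sum_i \sum_j F (mxvec_index i j).
Proof.
rewrite pair_big /=.
rewrite (reindex (fun p : 'I_m * 'I_n => mxvec_index p.1 p.2)) //.
exists (@idx_pair m n) => [p _|k _]; first by rewrite idx_pairK; case: p.
by case/mxvec_indexP: k => i j; rewrite idx_pairK.
Qed.

Lemma kronE m1 n1 m2 n2 (A : 'M[C]_(m1, n1)) (B : 'M[C]_(m2, n2)) i1 i2 j1 j2 :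
  kron A B (mxvec_index i1 i2) (mxvec_index j1 j2) = A i1 j1 * B i2 j2.
Proof. by rewrite /Defs.kron mxE !idx_pairK. Qed.

Lemma kron_mul m1 n1 p1 m2 n2 p2 (A : 'M[C]_(m1, n1)) (B : 'M[C]_(m2, n2))
   (A' : 'M[C]_(n1, p1)) (B' : 'M[C]_(n2, p2)) :
  kron A B *m kron A' B' = kron (A *m A') (B *m B').
Proof.
apply/matrixP=> i j; case/mxvec_indexP: i => i1 i2; case/mxvec_indexP: j => j1 j2.
rewrite kronE !mxE sum_idx big_distrl /=; apply: eq_bigr => k1 _.
rewrite big_distrr /=; apply: eq_bigr => k2 _.
by rewrite !kronE mulrACA.
Qed.

Lemma dag_kron m1 n1 m2 n2 (A : 'M[C]_(m1, n1)) (B : 'M[C]_(m2, n2)) :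
  dag (kron A B) = kron (dag A) (dag B).
Proof.
apply/matrixP=> i j; case/mxvec_indexP: i => i1 i2; case/mxvec_indexP: j => j1 j2.
by rewrite dagE !kronE !dagE rmorphM.
Qed.

Lemma kron11 m n : kron (1%:M : 'M[C]_m) (1%:M : 'M[C]_n) = 1%:M.
Proof.
apply/matrixP=> i j; case/mxvec_indexP: i => i1 i2; case/mxvec_indexP: j => j1 j2.
rewrite kronE !mxE.
have -> : (mxvec_index i1 i2 == mxvec_index j1 j2) = (i1 == j1) && (i2 == j2).
  apply/eqP/andP => [E|[/eqP-> /eqP->]] //.
  by have := idx_pairK i1 i2; rewrite E idx_pairK => -[-> ->].
by case: (i1 == j1); case: (i2 == j2); rewrite ?mulr1n ?mulr0n ?mulr1 ?mulr0 ?mul0r.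
Qed.

Lemma kronDl m1 n1 m2 n2 (A A' : 'M[C]_(m1, n1)) (B : 'M[C]_(m2, n2)) :
  kron (A + A') B = kron A B + kron A' B.
Proof.
apply/matrixP=> i j; case/mxvec_indexP: i => i1 i2; case/mxvec_indexP: j => j1 j2.
by rewrite !(kronE, mxE) mulrDl.
Qed.

Lemma kronZl m1 n1 m2 n2 a (A : 'M[C]_(m1, n1)) (B : 'M[C]_(m2, n2)) :
  kron (a *: A) B = a *: kron A B.
Proof.
apply/matrixP=> i j; case/mxvec_indexP: i => i1 i2; case/mxvec_indexP: j => j1 j2.
by rewrite !(kronE, mxE) mulrA.
Qed.

Lemma kronZr m1 n1 m2 n2 a (A : 'M[C]_(m1, n1)) (B : 'M[C]_(m2, n2)) :
  kron A (a *: B) = a *: kron A B.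
Proof.
apply/matrixP=> i j; case/mxvec_indexP: i => i1 i2; case/mxvec_indexP: j => j1 j2.
by rewrite !(kronE, mxE) mulrCA.
Qed.

Lemma kronNl m1 n1 m2 n2 (A : 'M[C]_(m1, n1)) (B : 'M[C]_(m2, n2)) :
  kron (- A) B = - kron A B.
Proof. by rewrite -scaleN1r kronZl scaleN1r. Qed.

Lemma kronBl m1 n1 m2 n2 (A A' : 'M[C]_(m1, n1)) (B : 'M[C]_(m2, n2)) :
  kron (A - A') B = kron A B - kron A' B.
Proof. by rewrite kronDl kronNl. Qed.

Lemma kron_suml m1 n1 m2 n2 I (r : seq I) (P : pred I) (F : I -> 'M[C]_(m1, n1))
  (B : 'M[C]_(m2, n2)) :
  kron (\sum_(i <- r | P i) F i) B = \sum_(i <- r | P i) kron (F i) B.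
Proof.
elim/big_rec2: _ => [|i x y _ <-]; last by rewrite kronDl.
apply/matrixP=> i j; case/mxvec_indexP: i => i1 i2; case/mxvec_indexP: j => j1 j2.
by rewrite !(kronE, mxE) mul0r.
Qed.

Lemma kron_sumr m1 n1 m2 n2 I (r : seq I) (P : pred I) (F : I -> 'M[C]_(m2, n2))
  (A : 'M[C]_(m1, n1)) :
  kron A (\sum_(i <- r | P i) F i) = \sum_(i <- r | P i) kron A (F i).
Proof.
elim/big_rec2: _ => [|i0 x y _ <-].
  apply/matrixP=> i j; case/mxvec_indexP: i => i1 i2; case/mxvec_indexP: j => j1 j2.
  by rewrite !(kronE, mxE) mulr0.
apply/matrixP=> i j; case/mxvec_indexP: i => i1 i2; case/mxvec_indexP: j => j1 j2.
by rewrite !(kronE, mxE) mulrDr.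
Qed.

End Aux.



Section Aux2.
Variable C : numClosedFieldType.

Lemma sum_dr n (F : 'I_n -> C) j : \sum_r F r * (1%:M : 'M[C]_n) r j = F j.
Proof.
rewrite (bigD1 j) //= big1 => [|r /negbTE rj]; first by rewrite mxE eqxx mulr1 addr0.
by rewrite mxE rj mulr0.
Qed.

Lemma sum_dl n (F : 'I_n -> C) j : \sum_r (1%:M : 'M[C]_n) j r * F r = F j.
Proof.
rewrite (bigD1 j) //= big1 => [|r rj]; first by rewrite mxE eqxx mul1r addr0.
by rewrite mxE eq_sym (negbTE rj) mul0r.
Qed.

Lemma sum_dl' n (F : 'I_n -> C) j : \sum_r (1%:M : 'M[C]_n) r j * F r = F j.
Proof.
rewrite (bigD1 j) //= big1 => [|r /negbTE rj]; first by rewrite mxE eqxx mul1r addr0.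
by rewrite mxE rj mul0r.
Qed.

Definition compm m n (u : 'cV[C]_m) : 'M[C]_(n, m * n) :=
  \matrix_(r, c) ((u (idx_pair c).1 0)^* * (1%:M : 'M[C]_n) r (idx_pair c).2).

Lemma compmE m n (u : 'cV[C]_m) r i1 i2 :
  compm n u r (mxvec_index i1 i2) = (u i1 0)^* * (1%:M : 'M[C]_n) r i2.
Proof. by rewrite mxE idx_pairK. Qed.

Lemma dag_compmE m n (u : 'cV[C]_m) r i1 i2 :
  dag (compm n u) (mxvec_index i1 i2) r = u i1 0 * (1%:M : 'M[C]_n) i2 r.
Proof.
rewrite dagE compmE rmorphM /= conjCK; congr (_ * _).
by rewrite !mxE (eq_sym i2 r); case: (r == i2); rewrite ?rmorph1 ?rmorph0.
Qed.

Lemma dag_compm_vec m n (u : 'cV[C]_m) (a : 'cV[C]_n) :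
  dag (compm n u) *m a = kron u a :> 'M_(m * n, 1).
Proof.
apply/matrixP=> i j; case/mxvec_indexP: i => i1 i2; rewrite !ord1.
rewrite mxE.
have -> : kron u a (mxvec_index i1 i2) 0 = kron u a (mxvec_index i1 i2) (mxvec_index 0 0).
  by congr (kron u a _ _); apply/val_inj; case: (mxvec_index _ _) => -[].
rewrite kronE (eq_bigr (fun r => (1%:M : 'M[C]_n) i2 r * (u i1 0 * a r 0))) ?sum_dl // => r _.
by rewrite dag_compmE [u i1 0 * _]mulrC -mulrA.
Qed.

Lemma compm_dag m n (u v : 'cV[C]_m) :
  compm n v *m dag (compm n u) = ((dag v *m u) 0 0)%:M.
Proof.
apply/matrixP=> r s; rewrite mxE sum_idx.
have -> : \sum_i \sum_j compm n v r (mxvec_index i j) * dag (compm n u) (mxvec_index i j) s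
  = \sum_i (v i 0)^* * u i 0 * (1%:M : 'M[C]_n) r s.
  apply: eq_bigr => i _; rewrite (eq_bigr (fun j => ((v i 0)^* * u i 0) *
      ((1%:M : 'M[C]_n) r j * (1%:M : 'M[C]_n) j s))).
    by rewrite -big_distrr /= sum_dl.
  by move=> j _; rewrite compmE dag_compmE mulrACA.
rewrite -big_distrl /= [in RHS]mxE [in LHS]mxE mulr_natr; congr (_ *+ _).
by rewrite mxE; apply: eq_bigr => i _; rewrite dagE.
Qed.

Lemma compm_mul m n (u v : 'cV[C]_m) :
  dag (compm n u) *m compm n v = kron (u *m dag v) (1%:M : 'M[C]_n).
Proof.
apply/matrixP=> i j; case/mxvec_indexP: i => i1 i2; case/mxvec_indexP: j => j1 j2.
rewrite mxE kronE !mxE big_ord1 dagE.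
rewrite (eq_bigr (fun r => (u i1 0 * (v j1 0)^*) *
   ((1%:M : 'M[C]_n) i2 r * (1%:M : 'M[C]_n) r j2))).
  by rewrite -big_distrr /= sum_dl mxE.
by move=> r _; rewrite dag_compmE compmE mulrACA.
Qed.

Lemma compm_kronl m n (u : 'cV[C]_m) (K : 'M[C]_m) :
  compm n u *m kron K (1%:M : 'M[C]_n) = compm n (dag K *m u).
Proof.
apply/matrixP=> r j; case/mxvec_indexP: j => j1 j2.
rewrite compmE mxE sum_idx !mxE rmorph_sum big_distrl /=.
apply: eq_bigr => i1 _.
rewrite (eq_bigr (fun i2 => ((u i1 0)^* * K i1 j1) *
   ((1%:M : 'M[C]_n) r i2 * (1%:M : 'M[C]_n) i2 j2))).
  by rewrite -big_distrr /= sum_dl dagE rmorphM /= conjCK mxE [(u i1 0)^* * _]mulrC.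
by move=> i2 _; rewrite compmE kronE mulrACA.
Qed.

Lemma compm_kronr m n (u : 'cV[C]_m) (K : 'M[C]_n) :
  compm n u *m kron (1%:M : 'M[C]_m) K = K *m compm n u.
Proof.
apply/matrixP=> r j; case/mxvec_indexP: j => j1 j2.
rewrite !mxE sum_idx.
rewrite (eq_bigr (fun i1 => (1%:M : 'M[C]_m) i1 j1 * ((u i1 0)^* * K r j2))).
  rewrite sum_dl' (eq_bigr (fun s => ((u j1 0)^* * K r s) * (1%:M : 'M[C]_n) s j2)).
    by rewrite sum_dr.
  by move=> s _; rewrite compmE mulrCA mulrA.
move=> i1 _; rewrite (eq_bigr (fun i2 => ((u i1 0)^* * (1%:M : 'M[C]_m) i1 j1) *
   ((1%:M : 'M[C]_n) r i2 * K i2 j2))).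
  by rewrite -big_distrr /= sum_dl mulrCA mulrA.
by move=> i2 _; rewrite compmE kronE mulrACA.
Qed.

End Aux2.



Section Aux3.
Variable C : numClosedFieldType.

Lemma dag_trmxE m n (A : 'M[C]_(m, n)) : dag A = map_mx Num.conj (A^T).
Proof. by apply/matrixP=> i j; rewrite dagE !mxE. Qed.

Lemma herm_spec n (A : 'M[C]_n) : dag A = A ->
  exists (M : 'M[C]_n) (d : 'rV[C]_n),
    [/\ M *m dag M = 1%:M, dag M *m M = 1%:M, A = dag M *m diag_mx d *m M
      & forall i, (d 0 i)^* = d 0 i].
Proof.
move=> HA.
have Ah : A \is hermsymmx.
  apply/is_hermitianmxP; rewrite expr0 scale1r -dag_trmxE; exact: esym.
have /orthomx_spectralP E := hermitian_normalmx Ah.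
have U := spectral_unitarymx A.
have U1 : spectralmx A *m dag (spectralmx A) = 1%:M.
  by rewrite dag_trmxE; apply/unitarymxP.
exists (spectralmx A), (spectral_diag A); split => //.
- exact: mulmx1C.
- rewrite {1}E invmx_unitary // -dag_trmxE //.
- move=> i; have /mxOverP/(_ 0 i) := hermitian_spectral_diag_real Ah.
  by move/conj_Creal.
Qed.

Lemma dag_delta n (i : 'I_n) : dag (delta_mx i 0 : 'cV[C]_n) = delta_mx 0 i.
Proof.
apply/matrixP=> a b; rewrite dagE !mxE.
by case: (b == i); case: (a == 0); rewrite ?rmorph1 ?rmorph0.
Qed.

Lemma quad_delta n (X : 'M[C]_n) i :
  (dag (delta_mx i 0 : 'cV[C]_n) *m X *m (delta_mx i 0 : 'cV[C]_n)) 0 0 = X i i.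
Proof. by rewrite dag_delta -rowE -colE !mxE. Qed.

Lemma diag_delta n (d : 'rV[C]_n) i :
  diag_mx d *m delta_mx i 0 = d 0 i *: (delta_mx i 0 : 'cV[C]_n).
Proof.
apply/matrixP=> a b; rewrite mul_diag_mx !mxE.
by case: eqP => [->|]; rewrite ?mulr1 ?mulr0 //; case: (b == 0); rewrite ?mulr0.
Qed.

Lemma psd_spec n (A : 'M[C]_n) : psd A ->
  exists (M : 'M[C]_n) (d : 'rV[C]_n),
    [/\ M *m dag M = 1%:M, dag M *m M = 1%:M, A = dag M *m diag_mx d *m M
      & forall i, 0 <= d 0 i].
Proof.
move=> [HA Hpos]; have [M [d [U1 U2 E _]]] := herm_spec HA.
exists M, d; split => // i.
have := Hpos (dag M *m delta_mx i 0).
rewrite dag_mul dagK E !mulmxA -[dag (delta_mx i 0) *m M *m dag M]mulmxA U1 mulmx1.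
by rewrite -(mulmxA _ M) U1 mulmx1 quad_delta mxE eqxx mulr1n.
Qed.

Lemma sum_conj0 n (F : 'I_n -> C) : \sum_j F j * (F j)^* = 0 -> forall j, F j = 0.
Proof.
move=> H j.
have := @psumr_eq0P _ _ xpredT (fun j => F j * (F j)^*) (fun k _ => mul_conjC_ge0 (F k)) H j isT.
by move/eqP; rewrite mul_conjC_eq0 => /eqP.
Qed.

Lemma mmdag0 m n (X : 'M[C]_(m, n)) : X *m dag X = 0 -> X = 0.
Proof.
move=> H; apply/matrixP=> i j; rewrite mxE; apply: (@sum_conj0 _ (fun j => X i j)).
have /matrixP/(_ i i) := H; rewrite [LHS]mxE [RHS]mxE => H2; apply: etrans H2; apply: eq_bigr => k _.
by rewrite dagE.
Qed.

Lemma trmmdag0 m (X : 'M[C]_m) : \tr (X *m dag X) = 0 -> X = 0.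
Proof.
move=> H.
have Hd : forall k, (X *m dag X) k k = 0.
  move=> k; apply: (@psumr_eq0P _ _ xpredT (fun k => (X *m dag X) k k)) => //.
  move=> l _; rewrite mxE sumr_ge0 // => r _; rewrite dagE mul_conjC_ge0 //.
apply/matrixP=> a b; rewrite [RHS]mxE; apply: (@sum_conj0 _ (fun j => X a j)).
apply: etrans (Hd a); rewrite mxE; apply: eq_bigr => k _; by rewrite dagE.
Qed.

Lemma psd_sqrt n (A : 'M[C]_n) : psd A -> exists T : 'M[C]_n, A = T *m dag T.
Proof.
move=> /psd_spec [M [d [U1 U2 E Hd]]].
exists (dag M *m diag_mx (\row_i sqrtC (d 0 i))).
rewrite dag_mul dagK dag_diag -!mulmxA (mulmxA (diag_mx _)) mulmx_diag E -!mulmxA.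
congr (_ *m (_ *m _)); congr diag_mx; apply/rowP=> i; rewrite !mxE.
rewrite geC0_conj ?sqrtC_ge0 // -expr2 sqrtCK //.
Qed.

Lemma supp_range n (A : 'M[C]_n) (w : 'cV[C]_n) : psd A -> in_supp A (A *m w).
Proof.
move=> /psd_spec [M [d [U1 U2 E Hd]]].
exists n, (fun i => if d 0 i != 0 then dag M *m (delta_mx i 0 : 'cV[C]_n) else 0),
  (fun i => d 0 i * (M *m w) i 0); split.
  move=> i; case: ifP => [nz|_]; last by exists 1; rewrite ltr01 mulmx0 scaler0.
  exists (d 0 i); split; first by rewrite lt_def nz Hd.
  by rewrite E -!mulmxA (mulmxA M) U1 mul1mx diag_delta -scalemxAr.
have -> : \sum_(i < n) (d 0 i * (M *m w) i 0) *:
     (if d 0 i != 0 then dag M *m (delta_mx i 0 : 'cV[C]_n) else 0)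
   = \sum_(i < n) (d 0 i * (M *m w) i 0) *: (dag M *m (delta_mx i 0 : 'cV[C]_n)).
  apply: eq_bigr => i _; case: ifP => // /negbFE/eqP ->.
  by rewrite mul0r !scale0r.
rewrite (eq_bigr (fun i => dag M *m ((d 0 i * (M *m w) i 0) *: delta_mx i 0))); last first.
  by move=> i _; rewrite scalemxAr.
rewrite -mulmx_sumr E -!mulmxA; congr (_ *m _).
rewrite [LHS]matrix_sum_delta; apply: eq_bigr => i _.
rewrite big_ord1 mul_diag_mx mxE; congr (_ *: _).
Qed.

Lemma supp_in_range n (A : 'M[C]_n) psi : in_supp A psi -> exists w, psi = A *m w.
Proof.
move=> [m [vs [cs [Hv ->]]]].
have: forall i, exists w, vs i = A *m w.
  move=> i; have [lam [lam0 Hl]] := Hv i.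
  exists (lam^-1 *: vs i); rewrite -scalemxAr Hl scalerA mulVf ?scale1r //.
  by rewrite gt_eqF.
move=> /fin_all_exists [ws Hws].
exists (\sum_i cs i *: ws i); rewrite mulmx_sumr; apply: eq_bigr => i _.
by rewrite Hws scalemxAr.
Qed.

End Aux3.



Section Aux4.
Variable C : numClosedFieldType.

Lemma diag_mul n (d e : 'rV[C]_n) : diag_mx d *m diag_mx e = diag_mx (\row_j (d 0 j * e 0 j)).
Proof. exact: mulmx_diag. Qed.

Lemma proj_exists n p (B : 'M[C]_(n, p)) :
  exists (Q : 'M[C]_n) (Z : 'M[C]_(p, n)),
    [/\ Q = B *m Z, dag Q = Q, Q *m Q = Q & Q *m B = B].
Proof.
have HG : dag (B *m dag B) = B *m dag B by rewrite dag_mul dagK.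
have [M [d [U1 U2 E Hr]]] := herm_spec HG.
pose e := \row_i ((d 0 i != 0)%:R : C).
pose di := \row_i (d 0 i)^-1.
have dde : \row_j (d 0 j * di 0 j) = e.
  apply/rowP=> j; rewrite !mxE; case: eqP => [->|/eqP nz]; first by rewrite mul0r.
  by rewrite mulfV.
have eee : \row_j (e 0 j * e 0 j) = e.
  by apply/rowP=> j; rewrite !mxE; case: (d 0 j != 0); rewrite ?mulr1 ?mulr0.
have ed : \row_j (e 0 j * d 0 j) = d.
  apply/rowP=> j; rewrite !mxE; case: eqP => [->|]; first by rewrite mulr0.
  by rewrite mul1r.
have cancel3 : forall a b : 'rV[C]_n,
    (dag M *m diag_mx a *m M) *m (dag M *m diag_mx b *m M)
    = dag M *m diag_mx (\row_j (a 0 j * b 0 j)) *m M.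
  move=> a b; rewrite !mulmxA -(mulmxA _ M (dag M)) U1 mulmx1.
  by rewrite -(mulmxA _ (diag_mx a)) diag_mul.
pose Q := dag M *m diag_mx e *m M.
have QG : Q *m (B *m dag B) = B *m dag B by rewrite E cancel3 ed.
exists Q, (dag B *m (dag M *m diag_mx di *m M)); split.
- by rewrite mulmxA E cancel3 dde.
- rewrite /Q !dag_mul dagK dag_diag mulmxA; congr (_ *m _ *m _).
  by congr diag_mx; apply/rowP=> j; rewrite !mxE rmorph_nat.
- by rewrite /Q cancel3 eee.
- have HQ : dag Q = Q.
    rewrite /Q !dag_mul dagK dag_diag mulmxA; congr (_ *m _ *m _).
    by congr diag_mx; apply/rowP=> j; rewrite !mxE rmorph_nat.
  have RG : (1%:M - Q) *m (B *m dag B) = 0 by rewrite mulmxBl mul1mx QG subrr.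
  have X0 : ((1%:M - Q) *m B) *m dag ((1%:M - Q) *m B) = 0.
    by rewrite dag_mul !mulmxA -(mulmxA _ B) RG mul0mx.
  have := mmdag0 X0; rewrite mulmxBl mul1mx => /eqP; rewrite subr_eq0 => /eqP E'.
  exact: esym E'.
Qed.

Lemma orth_sum d m (A : 'I_m -> 'M[C]_d) (X Y : 'M[C]_d) :
  \sum_i dag (A i) *m A i = 1%:M ->
  (forall i, dag (A i *m X) *m (A i *m Y) = 0) -> dag X *m Y = 0.
Proof.
move=> Hs H; rewrite -[Y]mul1mx -Hs mulmx_suml mulmx_sumr big1 // => i _.
by rewrite -(mulmxA (dag (A i))) mulmxA -dag_mul H.
Qed.

Lemma sum_kronl n m (K : 'I_m -> 'M[C]_2) :
  \sum_i dag (K i) *m K i = 1%:M ->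
  \sum_i dag (kron (K i) (1%:M : 'M[C]_n)) *m kron (K i) (1%:M : 'M[C]_n) = 1%:M.
Proof.
move=> H; rewrite (eq_bigr (fun i => kron (dag (K i) *m K i) (1%:M : 'M[C]_n))).
  by rewrite -kron_suml H kron11.
by move=> i _; rewrite dag_kron dag1 kron_mul mul1mx.
Qed.

Lemma sum_kronr n m (K : 'I_m -> 'M[C]_n) :
  \sum_i dag (K i) *m K i = 1%:M ->
  \sum_i dag (kron (1%:M : 'M[C]_2) (K i)) *m kron (1%:M : 'M[C]_2) (K i) = 1%:M.
Proof.
move=> H; rewrite (eq_bigr (fun i => kron (1%:M : 'M[C]_2) (dag (K i) *m K i))).
  by rewrite -kron_sumr H kron11.
by move=> i _; rewrite dag_kron dag1 kron_mul mul1mx.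
Qed.

Lemma conj_state d (A T : 'M[C]_d) : A *m (T *m dag T) *m dag A = (A *m T) *m dag (A *m T).
Proof. by rewrite dag_mul !mulmxA. Qed.

Lemma L1 n N (P : protocol C n N) : valid P -> forall k l, k != l ->
  forall Tk Tl : 'M[C]_(2 * n),
  outputs_correctly P (Tk *m dag Tk) k -> outputs_correctly P (Tl *m dag Tl) l ->
  dag Tk *m Tl = 0.
Proof.
elim: P => [j|m K next IH|m K next IH] /=.
- move=> _ k l kl Tk Tl [/trmmdag0 ->|jk]; first by rewrite dag0 mul0mx.
  move=> [/trmmdag0 ->|jl]; first by rewrite mulmx0.
  by move: kl; rewrite -jk -jl eqxx.
- move=> [Hs Hv] k l kl Tk Tl Hk Hl.
  apply: (orth_sum (sum_kronl n Hs)) => i.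
  apply: (IH i (Hv i) k l kl); by rewrite -conj_state.
- move=> [Hs Hv] k l kl Tk Tl Hk Hl.
  apply: (orth_sum (sum_kronr Hs)) => i.
  apply: (IH i (Hv i) k l kl); by rewrite -conj_state.
Qed.

End Aux4.



Section Aux5.
Variable C : numClosedFieldType.

Lemma ord2_cases (i : 'I_2) : i = 0 \/ i = 1.
Proof. by case: i => -[|[|]] //= H; [left|right]; apply/val_inj. Qed.

Lemma one_neq0 m : (0 < m)%N -> (1%:M : 'M[C]_m) != 0.
Proof.
move=> m0; apply/eqP => /matrixP/(_ (Ordinal m0) (Ordinal m0)).
by rewrite !mxE eqxx /= => /eqP; rewrite oner_eq0.
Qed.

Lemma delta_neq0 m (i : 'I_m) : (delta_mx i 0 : 'cV[C]_m) != 0.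
Proof.
apply/eqP => /matrixP/(_ i 0); rewrite !mxE !eqxx /= => /eqP; by rewrite oner_eq0.
Qed.

Lemma unit_mul_neq0 m (M : 'M[C]_m) (v : 'cV[C]_m) :
  M *m dag M = 1%:M -> v != 0 -> dag M *m v != 0.
Proof.
move=> U vn0; apply: contra vn0 => /eqP H.
by rewrite -[v]mul1mx -U -mulmxA H mulmx0.
Qed.

Lemma nontriv_all d m (K : 'I_m -> 'M[C]_d) :
  ~ nontrivial_meas K -> forall i, trivial_op (K i).
Proof. by move=> H i; apply: NNPP => Hi; apply: H; exists i. Qed.

Lemma some_c_nz d m (c : 'I_m -> C) : (0 < d)%N ->
  \sum_i (c i)%:M = (1%:M : 'M[C]_d) -> exists i, c i != 0.
Proof.
move=> d0 H; apply: NNPP => Hn; move: (one_neq0 d0); rewrite -H big1 ?eqxx //.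
move=> i _; have: ~ (c i != 0) by move=> Hi; apply: Hn; exists i.
by move/negP/negbNE/eqP ->; apply/matrixP=> a b; rewrite !mxE mul0rn.
Qed.

End Aux5.

Section Aux6.
Variable C : numClosedFieldType.

Lemma diag2 (d : 'rV[C]_2) :
  diag_mx d = d 0 0 *: delta_mx 0 0 + d 0 1 *: delta_mx 1 1.
Proof.
apply/matrixP=> i j; rewrite !mxE.
by case: (ord2_cases i) => ->; case: (ord2_cases j) => ->; rewrite ?mxE /=
  ?mulr1 ?mulr0 ?addr0 ?add0r ?mulr1n ?mulr0n.
Qed.

Lemma id2 : (1%:M : 'M[C]_2) = delta_mx 0 0 + delta_mx 1 1.
Proof.
apply/matrixP=> i j; rewrite !mxE.
by case: (ord2_cases i) => ->; case: (ord2_cases j) => ->; rewrite /= ?addr0 ?add0r.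
Qed.

Lemma nontriv_basis (E : 'M[C]_2) : dag E = E -> ~ (exists c, E = c%:M) ->
  exists (u0 u1 : 'cV[C]_2) (a0 b0 a1 b1 : C),
   [/\ u0 != 0, u1 != 0, dag u0 *m u1 = 0,
      u0 *m dag u0 = a0 *: (E - b0 *: 1%:M) & u1 *m dag u1 = a1 *: (E - b1 *: 1%:M)].
Proof.
move=> HE NT; have [M [d [U1 U2 Ee _]]] := herm_spec HE.
pose u (b : 'I_2) := dag M *m (delta_mx b 0 : 'cV[C]_2).
have Pu : forall b, u b *m dag (u b) = dag M *m delta_mx b b *m M.
  move=> b; rewrite /u dag_mul dagK dag_delta !mulmxA -(mulmxA _ (delta_mx b 0)).
  by rewrite mul_delta_mx.
have Esum : E = d 0 0 *: (u 0 *m dag (u 0)) + d 0 1 *: (u 1 *m dag (u 1)).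
  by rewrite !Pu Ee diag2 mulmxDr mulmxDl -!scalemxAr -!scalemxAl.
have Isum : (1%:M : 'M[C]_2) = u 0 *m dag (u 0) + u 1 *m dag (u 1).
  by rewrite !Pu -mulmxDl -mulmxDr -id2 mulmx1 U2.
have dne : d 0 0 - d 0 1 != 0.
  rewrite subr_eq0; apply/negP => /eqP dd; apply: NT; exists (d 0 0).
  by rewrite Esum -dd -scalerDr -Isum scalemx1.
have dne' : d 0 1 - d 0 0 != 0 by rewrite -opprB oppr_eq0.
exists (u 0), (u 1), (d 0 0 - d 0 1)^-1, (d 0 1), (d 0 1 - d 0 0)^-1, (d 0 0); split.
- by rewrite /u unit_mul_neq0 // delta_neq0.
- by rewrite /u unit_mul_neq0 // delta_neq0.
- rewrite /u dag_mul dagK dag_delta -(mulmxA _ M) (mulmxA M) U1 mul1mx.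
  by rewrite mul_delta_mx_cond /= mulr0n.
- rewrite {1}Esum {1}Isum (scalerDr (d 0 1)) opprD addrACA -!scalerBl subrr scale0r addr0.
  by rewrite scalerA mulVf // scale1r.
- rewrite {1}Esum {1}Isum (scalerDr (d 0 0)) opprD addrACA -!scalerBl subrr scale0r add0r.
  by rewrite scalerA mulVf // scale1r.
Qed.

End Aux6.

Section L2.
Variable C : numClosedFieldType.

Definition good n N (u : 'cV[C]_2) (T : 'I_N -> 'M[C]_(2 * n)) :=
  forall k l, k != l -> dag (T k) *m kron (u *m dag u) (1%:M : 'M[C]_n) *m T l = 0.

Lemma kron_conj_l n (K X : 'M[C]_2) :
  kron (dag K *m X *m K) (1%:M : 'M[C]_n)
  = dag (kron K (1%:M : 'M[C]_n)) *m kron X 1%:M *m kron K 1%:M.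
Proof. by rewrite dag_kron dag1 !kron_mul !mul1mx. Qed.

Lemma kron_conj_r n (K : 'M[C]_n) (X : 'M[C]_2) :
  dag (kron (1%:M : 'M[C]_2) K) *m kron X 1%:M *m kron 1%:M K = kron X (dag K *m K).
Proof. by rewrite dag_kron dag1 !kron_mul !mul1mx !mulmx1. Qed.

Lemma std_basis : exists u0 u1 : 'cV[C]_2, [/\ u0 != 0, u1 != 0 & dag u0 *m u1 = 0].
Proof.
exists (delta_mx 0 0), (delta_mx 1 0); split; rewrite ?delta_neq0 //.
by rewrite dag_delta mul_delta_mx_cond /= mulr0n.
Qed.

Lemma trivial_inv d (K : 'M[C]_d) c : dag K *m K = c%:M -> c != 0 ->
  K *m dag K = c%:M.
Proof.
move=> Hc cnz.
have H1 : (c^-1 *: dag K) *m K = 1%:M by rewrite -scalemxAl Hc scale_scalar_mx mulVf.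
have := mulmx1C H1; rewrite -scalemxAr => H2.
by rewrite -[K *m dag K]scale1r -(mulfV cnz) -scalerA H2 scalemx1.
Qed.

Lemma L2 n N : (0 < n)%N -> forall P : protocol C n N, alice_first P -> valid P ->
  forall T : 'I_N -> 'M[C]_(2 * n),
  (forall k, outputs_correctly P (T k *m dag (T k)) k) ->
  exists u0 u1 : 'cV[C]_2, [/\ u0 != 0, u1 != 0, dag u0 *m u1 = 0, good u0 T & good u1 T].
Proof.
move=> n0; elim => [j|m K next IH|m K next IH] /=.
- move=> _ _ T HT.
  have Z : forall k l, k != l -> T k = 0 \/ T l = 0.
    move=> k l kl; case: (HT k) => [/trmmdag0|jk]; first by left.
    case: (HT l) => [/trmmdag0|jl]; first by right.
    by move: kl; rewrite -jk -jl eqxx.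
  have [u0 [u1 [H0 H1 H2]]] := std_basis; exists u0, u1; split => // k l kl;
    by case: (Z k l kl) => ->; rewrite ?dag0 ?mul0mx ?mulmx0.
- move=> Haf [Hs Hv] T HT.
  case: (classic (nontrivial_meas K)) => [[i Hi]|Hn].
  + pose E := dag (K i) *m K i.
    have HE : dag E = E by rewrite /E dag_mul dagK.
    have NT : ~ (exists c, E = c%:M) by move=> [c Hc]; apply: Hi; exists c.
    have [u0 [u1 [a0 [b0 [a1 [b1 [H0 H1 H2 P0 P1]]]]]]] := nontriv_basis HE NT.
    have O1 : forall k l, k != l -> dag (T k) *m T l = 0.
      move=> k l kl; apply: (orth_sum (sum_kronl n Hs)) => j.
      by apply: (L1 (Hv j) kl); rewrite -conj_state.
    have O2 : forall k l, k != l -> dag (T k) *m kron E (1%:M : 'M[C]_n) *m T l = 0.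
      move=> k l kl; have := L1 (Hv i) kl (Tk := kron (K i) 1%:M *m T k)
        (Tl := kron (K i) 1%:M *m T l).
      rewrite -!conj_state => /(_ (HT k i) (HT l i)).
      have kE : dag (kron (K i) (1%:M : 'M[C]_n)) *m kron (K i) 1%:M = kron E 1%:M.
        by rewrite dag_kron dag1 kron_mul mul1mx.
      by rewrite dag_mul !mulmxA => H; rewrite -kE mulmxA H.
    have GG : forall (u : 'cV[C]_2) a b, u *m dag u = a *: (E - b *: 1%:M) -> good u T.
      move=> u a b Pu k l kl; rewrite Pu kronZl kronBl kronZl kron11.
      rewrite -scalemxAr -scalemxAl mulmxBr mulmxBl -scalemxAr -scalemxAl mulmx1.
      by rewrite O1 // O2 // scaler0 subrr scaler0.
    exists u0, u1; split => //; [exact: GG P0 | exact: GG P1].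
  + have Ht := nontriv_all Hn.
    have [c Hc] := fin_all_exists Ht.
    have [i cnz] : exists i, c i != 0.
      apply: (@some_c_nz _ 2) => //; rewrite -Hs; apply: eq_bigr => i _; by rewrite Hc.
    have Haf' : alice_first (next i).
      by case: Haf => // -[j Hj]; exfalso; apply: Hn; exists j.
    have HT' : forall k, outputs_correctly (next i)
        ((kron (K i) 1%:M *m T k) *m dag (kron (K i) 1%:M *m T k)) k.
      by move=> k; rewrite -conj_state; exact: HT k i.
    have [u0 [u1 [H0 H1 H2 G0 G1]]] := IH i Haf' (Hv i) _ HT'.
    have KK := trivial_inv (Hc i) cnz.
    have nz : forall u : 'cV[C]_2, u != 0 -> dag (K i) *m u != 0.
      move=> u; apply: contra => /eqP H.
      have : K i *m dag (K i) *m u = 0 by rewrite -mulmxA H mulmx0.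
      by rewrite KK mul_scalar_mx => /eqP; rewrite scaler_eq0 (negbTE cnz).
    have GG : forall u : 'cV[C]_2,
        good u (fun k => kron (K i) 1%:M *m T k) -> good (dag (K i) *m u) T.
      move=> u Gu k l kl; move: (Gu k l kl); rewrite !dag_mul dagK !mulmxA.
      by rewrite -(mulmxA (dag (K i)) u) kron_conj_l !mulmxA.
    exists (dag (K i) *m u0), (dag (K i) *m u1); split; [exact: nz|exact: nz| |exact: GG|exact: GG].
    by rewrite dag_mul dagK -mulmxA (mulmxA (K i)) KK mul_scalar_mx -scalemxAr H2 scaler0.
- move=> [Hn Haf] [Hs Hv] T HT.
  have Ht := nontriv_all Hn.
  have [c Hc] := fin_all_exists Ht.
  have [i cnz] : exists i, c i != 0.
    apply: (@some_c_nz _ n) => //; rewrite -Hs; apply: eq_bigr => i _; by rewrite Hc.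
  have HT' : forall k, outputs_correctly (next i)
      ((kron 1%:M (K i) *m T k) *m dag (kron 1%:M (K i) *m T k)) k.
    by move=> k; rewrite -conj_state; exact: HT k i.
  have [u0 [u1 [H0 H1 H2 G0 G1]]] := IH i (Haf i) (Hv i) _ HT'.
  have GG : forall u : 'cV[C]_2,
      good u (fun k => kron 1%:M (K i) *m T k) -> good u T.
    move=> u Gu k l kl; have := Gu k l kl.
    rewrite dag_mul !mulmxA -(mulmxA (dag (T k)) (dag (kron 1%:M (K i)))).
    rewrite -(mulmxA (dag (T k)) _ (kron 1%:M (K i))) kron_conj_r Hc -[(c i)%:M]scalemx1 kronZr -scalemxAr -scalemxAl => /eqP.
    by rewrite scaler_eq0 (negbTE cnz) /= => /eqP.
  by exists u0, u1; split => //; apply: GG.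
Qed.

End L2.



Section Aux7.
Variable C : numClosedFieldType.

Lemma dag_row_mx m n1 n2 (A : 'M[C]_(m, n1)) (B : 'M[C]_(m, n2)) :
  dag (row_mx A B) = col_mx (dag A) (dag B).
Proof. by rewrite !dag_trmxE tr_row_mx map_col_mx. Qed.

Lemma unit2 (u0 u1 : 'cV[C]_2) :
  dag u0 *m u0 = 1%:M -> dag u1 *m u1 = 1%:M -> dag u0 *m u1 = 0 ->
  u0 *m dag u0 + u1 *m dag u1 = 1%:M.
Proof.
move=> H0 H1 H01.
have H10 : dag u1 *m u0 = 0 by rewrite -[u0]dagK -dag_mul H01 dag0.
have HU : dag (row_mx u0 u1) *m row_mx u0 u1 = 1%:M.
  by rewrite dag_row_mx mul_col_row H0 H1 H01 H10 -scalar_mx_block.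
have HU' : dag (row_mx u0 u1 : 'M[C]_2) *m (row_mx u0 u1 : 'M[C]_2) = 1%:M := HU.
have HU2 : row_mx u0 u1 *m dag (row_mx u0 u1) = 1%:M := mulmx1C HU'.
by move: HU2; rewrite dag_row_mx mul_row_col.
Qed.

Lemma coef_compm n (u v : 'cV[C]_2) (a : 'cV[C]_n) :
  compm n v *m kron u a = ((dag v *m u) 0 0) *: a.
Proof. by rewrite -dag_compm_vec mulmxA compm_dag mul_scalar_mx. Qed.

Lemma decomp n (u0 u1 : 'cV[C]_2) (psi : 'cV[C]_(2 * n)) :
  u0 *m dag u0 + u1 *m dag u1 = 1%:M ->
  psi = kron u0 (compm n u0 *m psi) + kron u1 (compm n u1 *m psi).
Proof.
move=> H; rewrite -!dag_compm_vec !mulmxA -mulmxDl !compm_mul -kronDl H kron11.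
by rewrite mul1mx.
Qed.

Lemma normalize (u : 'cV[C]_2) : u != 0 ->
  exists s : C, [/\ s != 0, s^* = s & dag (s *: u) *m (s *: u) = 1%:M].
Proof.
move=> un0; pose q := (dag u *m u) 0 0.
have qE : dag u *m u = q%:M by apply/matrixP=> i j; rewrite !ord1 [RHS]mxE ?eqxx /= ?mulr1n.
have qpos : 0 < q.
  rewrite /q mxE; have [i ui] : exists i, u i 0 != 0.
    apply: NNPP => H; suff E : u = 0 by rewrite E eqxx in un0.
    apply/matrixP=> i j; rewrite ord1 mxE.
    by apply: NNPP => Hi; apply: H; exists i; apply/eqP.
  rewrite (bigD1 i) //= ltr_pwDl //.
    by rewrite dagE mulrC mul_conjC_gt0.
  by rewrite sumr_ge0 // => j _; rewrite dagE mulrC mul_conjC_ge0.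
have sq : 0 < sqrtC q by rewrite sqrtC_gt0.
exists (sqrtC q)^-1; split.
- by rewrite invr_eq0 gt_eqF.
- by rewrite geC0_conj // invr_ge0 ltW.
- rewrite dagZ -scalemxAl -scalemxAr qE scalerA scale_scalar_mx.
  rewrite geC0_conj ?invr_ge0 ?ltW // -invrM ?unitfE ?gt_eqF // -expr2 sqrtCK.
  by rewrite mulVf // gt_eqF.
Qed.

End Aux7.

Section Forward.
Variable C : numClosedFieldType.

Lemma final_ortho n N (u : 'cV[C]_2) (T : 'I_N -> 'M[C]_(2 * n)) k l :
  k != l -> good u T -> forall w z : 'cV[C]_(2 * n),
  dag (compm n u *m (T k *m dag (T k) *m w)) *m (compm n u *m (T l *m dag (T l) *m z)) = 0.
Proof.
move=> kl g w z.
have -> : dag (compm n u *m (T k *m dag (T k) *m w)) *m (compm n u *m (T l *m dag (T l) *m z))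
  = dag w *m T k *m (dag (T k) *m kron (u *m dag u) 1%:M *m T l) *m dag (T l) *m z.
  rewrite !dag_mul dagK !mulmxA -(mulmxA _ (dag (compm n u)) (compm n u)) compm_mul.
  by rewrite ?mulmxA.
by rewrite g // mulmx0 !mul0mx.
Qed.

Lemma forward n N (HN : (0 < N)%N) (rho : 'I_N -> 'M[C]_(2 * n))
  (Hdens : forall k, density (rho k)) :
  (exists P : protocol C n N, alice_first P /\ perfectly_discriminates P rho) ->
  exists u0 u1 : 'cV[C]_2,
     (dag u0 *m u0 = 1%:M /\ dag u1 *m u1 = 1%:M /\ dag u0 *m u1 = 0) /\
     forall (k l : 'I_N), k != l ->
     forall (psik psil : 'cV[C]_(2 * n)),
       in_supp (rho k) psik -> in_supp (rho l) psil ->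
     forall (a0 a1 b0 b1 : 'cV[C]_n),
       psik = kron u0 a0 + kron u1 a1 ->
       psil = kron u0 b0 + kron u1 b1 ->
       dag a0 *m b0 = 0 /\ dag a1 *m b1 = 0.
Proof.
move=> [P [Haf [Hval Hout]]].
have n0 : (0 < n)%N.
  case: (posnP n) => // n0; exfalso.
  have [_ Htr] := Hdens (Ordinal HN); move: (rho (Ordinal HN)) Htr.
  rewrite n0 => r; rewrite /mxtrace big_ord0 => /eqP; by rewrite eq_sym oner_eq0.
have HT0 : forall k, exists T : 'M[C]_(2 * n), rho k = T *m dag T :=
  fun k => psd_sqrt (Hdens k).1.
have [T HT] := fin_all_exists HT0.
have Hout' : forall k, outputs_correctly P (T k *m dag (T k)) k by move=> k; rewrite -HT.
have [v0 [v1 [nz0 nz1 o01 g0 g1]]] := L2 n0 Haf Hval Hout'.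
have [s0 [s0n s0r E0]] := normalize nz0.
have [s1 [s1n s1r E1]] := normalize nz1.
have G : forall (s : C) v, s^* = s -> good v T -> good (s *: v) T.
  move=> s v sr g k l kl; rewrite dagZ sr -scalemxAr -scalemxAl scalerA kronZl.
  by rewrite -scalemxAr -scalemxAl g // scaler0.
have O : dag (s0 *: v0) *m (s1 *: v1) = 0.
  by rewrite dagZ -scalemxAl -scalemxAr o01 !scaler0.
have O' : dag (s1 *: v1) *m (s0 *: v0) = 0.
  by rewrite -[s0 *: v0]dagK -dag_mul O dag0.
have U := unit2 E0 E1 O.
exists (s0 *: v0), (s1 *: v1); split => //.
move=> k l kl psik psil Hk Hl a0 a1 b0 b1 Ek El.
have [w Ew] := supp_in_range Hk; have [z Ez] := supp_in_range Hl.
rewrite Ew HT in Ek; rewrite Ez HT in El.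
have C0 : forall (a b : 'cV[C]_n) psi, psi = kron (s0 *: v0) a + kron (s1 *: v1) b ->
    a = compm n (s0 *: v0) *m psi /\ b = compm n (s1 *: v1) *m psi.
  move=> a b psi ->; rewrite !mulmxDr !coef_compm E0 E1 O O' !mxE /=.
  by rewrite !scale1r !scale0r addr0 add0r.
have [-> ->] := C0 _ _ _ Ek; have [-> ->] := C0 _ _ _ El.
by split; apply: final_ortho => //; apply: G.
Qed.

End Forward.



Section Backward.
Variable C : numClosedFieldType.

Lemma mat_from_vec m n p (X : 'M[C]_(m, n)) (Y : 'M[C]_(m, p)) :
  (forall (w : 'cV[C]_n) (z : 'cV[C]_p), dag (X *m w) *m (Y *m z) = 0) -> dag X *m Y = 0.
Proof.
move=> H; apply/matrixP=> i j.
have := H (delta_mx i 0) (delta_mx j 0).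
rewrite dag_mul dag_delta mulmxA -mulmxA -rowE -colE => /matrixP/(_ 0 0).
rewrite [RHS]mxE => H2; rewrite [RHS]mxE; apply: etrans _ H2.
by rewrite !mxE; apply: eq_bigr => k _; rewrite !mxE.
Qed.

Lemma keyK n (u : 'cV[C]_2) (K : 'M[C]_n) :
  kron (1%:M : 'M[C]_2) K *m kron (u *m dag u) 1%:M = dag (compm n u) *m K *m compm n u.
Proof.
rewrite kron_mul mul1mx mulmx1 -mulmxA -compm_kronr mulmxA compm_mul kron_mul.
by rewrite mulmx1 mul1mx.
Qed.

Lemma nontriv_proj (u0 u1 : 'cV[C]_2) :
  dag u0 *m u0 = 1%:M -> dag u1 *m u1 = 1%:M -> dag u0 *m u1 = 0 ->
  ~ trivial_op (u0 *m dag u0).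
Proof.
move=> E0 E1 O [c Hc].
have Pid : dag (u0 *m dag u0) *m (u0 *m dag u0) = u0 *m dag u0.
  by rewrite dag_mul dagK mulmxA -(mulmxA u0) E0 mulmx1.
rewrite Pid in Hc.
have c0 : c = 0.
  have : u0 *m dag u0 *m u1 = c%:M *m u1 by rewrite Hc.
  rewrite -mulmxA O mulmx0 mul_scalar_mx => /(congr1 (mulmx (dag u1))).
  rewrite mulmx0 -scalemxAr E1 => /matrixP/(_ 0 0); rewrite !mxE eqxx mulr1n mulr1.
  by move->.
have : u0 *m dag u0 *m u0 = 0 by rewrite Hc c0 mul_scalar_mx scale0r.
rewrite -mulmxA E0 mulmx1 => u00.
by move: E0; rewrite u00 dag0 mul0mx => /matrixP/(_ 0 0); rewrite !mxE eqxx /= => /eqP;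
  rewrite eq_sym oner_eq0.
Qed.

Lemma backward n N (HN : (0 < N)%N) (rho : 'I_N -> 'M[C]_(2 * n))
  (Hdens : forall k, density (rho k)) :
  (exists u0 u1 : 'cV[C]_2,
     (dag u0 *m u0 = 1%:M /\ dag u1 *m u1 = 1%:M /\ dag u0 *m u1 = 0) /\
     forall (k l : 'I_N), k != l ->
     forall (psik psil : 'cV[C]_(2 * n)),
       in_supp (rho k) psik -> in_supp (rho l) psil ->
     forall (a0 a1 b0 b1 : 'cV[C]_n),
       psik = kron u0 a0 + kron u1 a1 ->
       psil = kron u0 b0 + kron u1 b1 ->
       dag a0 *m b0 = 0 /\ dag a1 *m b1 = 0) ->
  exists P : protocol C n N, alice_first P /\ perfectly_discriminates P rho.
Proof.
move=> [u0 [u1 [[E0 [E1 O]] Hc]]].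
case: N HN rho Hdens Hc => // N' _ rho Hdens Hc.
pose u (b : 'I_2) := if b == 0 then u0 else u1.
have U := unit2 E0 E1 O.
pose Bm (b : 'I_2) k := compm n (u b) *m rho k.
have Orth : forall b k l, k != l -> dag (Bm b k) *m Bm b l = 0.
  move=> b k l kl; apply: mat_from_vec => w z; rewrite -!mulmxA.
  have Hk := supp_range w (Hdens k).1; have Hl := supp_range z (Hdens l).1.
  have [H0 H1] := Hc k l kl _ _ Hk Hl _ _ _ _ (decomp (rho k *m w) U) (decomp (rho l *m z) U).
  by rewrite /u; case: (ord2_cases b) => ->.
have Hp : forall p : 'I_2 * 'I_N'.+1, exists Q : 'M[C]_n,
    [/\ exists Z : 'M[C]_(2 * n, n), Q = Bm p.1 p.2 *m Z, dag Q = Q, Q *m Q = Q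
      & Q *m Bm p.1 p.2 = Bm p.1 p.2].
  move=> p; have [Q [Z [H1 H2 H3 H4]]] := proj_exists (Bm p.1 p.2).
  by exists Q; split => //; exists Z.
have [Q HQ] := fin_all_exists Hp.
have QB0 : forall b j k, j != k -> Q (b, j) *m Bm b k = 0.
  move=> b j k jk; have [[Z EZ] HD _ _] := HQ (b, j).
  by rewrite -HD {1}EZ dag_mul -mulmxA Orth // mulmx0.
have QQ0 : forall b j k, j != k -> Q (b, j) *m Q (b, k) = 0.
  move=> b j k jk; have [[Z EZ] _ _ _] := HQ (b, k).
  by rewrite EZ mulmxA QB0 // mul0mx.
have QQ : forall b j, Q (b, j) *m Q (b, j) = Q (b, j) by move=> b j; case: (HQ (b, j)).
have QH : forall b j, dag (Q (b, j)) = Q (b, j) by move=> b j; case: (HQ (b, j)).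
have QBB : forall b j, Q (b, j) *m Bm b j = Bm b j by move=> b j; case: (HQ (b, j)).
pose S b := \sum_j Q (b, j).
pose R b := 1%:M - S b.
have SB : forall b k, S b *m Bm b k = Bm b k.
  move=> b k; rewrite /S mulmx_suml (bigD1 k) //= QBB big1 ?addr0 // => j jk.
  by rewrite QB0.
have RB0 : forall b k, R b *m Bm b k = 0 by move=> b k; rewrite /R mulmxBl mul1mx SB subrr.
have SS : forall b, S b *m S b = S b.
  move=> b; rewrite {1}/S mulmx_suml; apply: eq_bigr => j _.
  rewrite /S mulmx_sumr (bigD1 j) //= QQ big1 ?addr0 // => k kj.
  by rewrite QQ0 // eq_sym.
have SH : forall b, dag (S b) = S b.
  by move=> b; rewrite /S dag_sum; apply: eq_bigr => j _; rewrite QH.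
have RR : forall b, dag (R b) *m R b = R b.
  move=> b; rewrite /R dagB dag1 SH mulmxBl mul1mx mulmxBr mulmx1 SS subrr subr0 //.
pose Kop (b : 'I_2) (i : 'I_N'.+2) := if (i < N'.+1)%N then Q (b, inord i) else R b.
have complete : forall b, \sum_i dag (Kop b i) *m Kop b i = 1%:M.
  move=> b; rewrite big_ord_recr /= /Kop ltnn RR.
  rewrite (eq_bigr (fun j => Q (b, j))); first by rewrite -/(S b) /R addrC subrK.
  move=> j _; rewrite /= ltn_ord.
  have -> : inord (widen_ord (leqnSn N'.+1) j) = j by apply/val_inj; rewrite /= inordK.
  by rewrite QH QQ.
exists (@MeasA C n N'.+1 2 (fun b => u b *m dag (u b))
          (fun b => @MeasB C n N'.+1 N'.+2 (Kop b) (fun i => @Output C n N'.+1 (inord i)))).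
split.
  by left; exists 0; rewrite /u eqxx; apply: nontriv_proj E0 E1 O.
split.
  split => [|b]; last by split => // i.
  rewrite !big_ord_recr big_ord0 /u /=.
  have Pid : forall v : 'cV[C]_2, dag v *m v = 1%:M ->
      dag (v *m dag v) *m (v *m dag v) = v *m dag v.
    by move=> v Ev; rewrite dag_mul dagK mulmxA -(mulmxA v) Ev mulmx1.
  by rewrite add0r !Pid.
move=> k b i /=.
set A := kron (u b *m dag (u b)) (1%:M : 'M[C]_n).
set Kb := kron (1%:M : 'M[C]_2) (Kop b i).
have Z : forall K : 'M[C]_n, K *m Bm b k = 0 ->
    kron (1%:M : 'M[C]_2) K *m (A *m rho k *m dag A) *m dag (kron 1%:M K) = 0.
  move=> K HK; rewrite !mulmxA /A keyK -(mulmxA _ (compm n (u b))) -/(Bm b k).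
  by rewrite -(mulmxA _ K) HK mulmx0 !mul0mx.
case: (boolP ((i < N'.+1)%N && (inord i == k))) => [/andP [_ /eqP ->]|H]; first by right.
left; rewrite /Kb Z ?mxtrace0 //.
rewrite /Kop; case: ifP => iN; last by rewrite RB0.
by rewrite QB0 //; move: H; rewrite iN.
Qed.

End Backward.


Theorem theorem1 (C : numClosedFieldType) (n N : nat) (HN : (0 < N)%N)
  (rho : 'I_N -> 'M[C]_(2 * n))
  (Hdens : forall k, density (rho k))
  (Horth : forall k l, k != l -> \tr (rho k *m rho l) = 0) :
  (exists P : protocol C n N, alice_first P /\ perfectly_discriminates P rho)
  <->
  (exists u0 u1 : 'cV[C]_2,
     (dag u0 *m u0 = 1%:M /\ dag u1 *m u1 = 1%:M /\ dag u0 *m u1 = 0) /\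
     forall (k l : 'I_N), k != l ->
     forall (psik psil : 'cV[C]_(2 * n)),
       in_supp (rho k) psik -> in_supp (rho l) psil ->
     forall (a0 a1 b0 b1 : 'cV[C]_n),
       psik = kron u0 a0 + kron u1 a1 ->
       psil = kron u0 b0 + kron u1 b1 ->
       dag a0 *m b0 = 0 /\ dag a1 *m b1 = 0).
Proof.
split; [exact: forward | exact: backward].
Qed.
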